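(* Consider the network and loss $\mathcal{L}$ from the context. If $\mathbf{P}\in\mathbb{R}^D$ is such that there exist $i\in I$ and $k\in K$ with $\rho(\mathbf{w}_i\cdot\mathbf{x}_k)\ne0$, then $\mathbf{P}$ is not a local maximum of $\mathcal{L}$.
   Context: Fix an integer $d>1$, finite index sets $I$ (hidden neurons), $J$ (output neurons), $K$ (samples), reals $\alpha^+\neq\alpha^-$, and $\rho(z)=\alpha^+z$ for $z\ge0$, $\rho(z)=\alpha^-z$ for $z<0$ (componentwise). Parameters $\mathbf{P}=(W,H)\in\mathbb{R}^D$, $D=|J||I|+|I|d$, with $W\in\mathbb{R}^{|I|\times d}$ having rows $\mathbf{w}_i$ and $H=(h_{ji})\in\mathbb{R}^{|J|\times|I|}$; output $\hat{\mathbf{y}}(\mathbf{P};\mathbf{x})=H\rho(W\mathbf{x})$; training data $\mathbf{x}_k\in\mathbb{R}^d$, $\mathbf{y}_k\in\mathbb{R}^{|J|}$; loss $\mathcal{L}(\mathbf{P})=\frac12\sum_{k\in K}\|\hat{\mathbf{y}}(\mathbf{P};\mathbf{x}_k)-\mathbf{y}_k\|^2$. *)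

(* Defs.v *)
From HB Require Import structures.
From mathcomp Require Import all_boot all_order all_algebra.
Set Implicit Arguments. Unset Strict Implicit. Unset Printing Implicit Defensive.
Import Order.TTheory GRing.Theory Num.Theory.
Local Open Scope ring_scope.

(* Index sets: I = 'I_nI (hidden), J = 'I_nJ (outputs), K = 'I_nK (samples). *)

Definition rho {R : realFieldType} (ap am : R) (z : R) : R :=
  if 0 <= z then ap * z else am * z.

Definition dotrow {R : realFieldType} {nI d : nat}
  (W : 'M[R]_(nI, d)) (i : 'I_nI) (x : 'cV[R]_d) : R :=
  \sum_(l < d) W i l * x l 0.

Definition net_out {R : realFieldType} (ap am : R) {nI nJ d : nat}
  (W : 'M[R]_(nI, d)) (H : 'M[R]_(nJ, nI)) (x : 'cV[R]_d) (j : 'I_nJ) : R :=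
  \sum_(i < nI) H j i * rho ap am (dotrow W i x).

Definition loss {R : realFieldType} (ap am : R) {nI nJ nK d : nat}
  (xs : 'I_nK -> 'cV[R]_d) (ys : 'I_nK -> 'cV[R]_nJ)
  (W : 'M[R]_(nI, d)) (H : 'M[R]_(nJ, nI)) : R :=
  2^-1 * \sum_(k < nK) \sum_(j < nJ) (net_out ap am W H (xs k) j - ys k j 0) ^+ 2.

Definition local_max {R : realFieldType} {nI nJ d : nat}
  (f : 'M[R]_(nI, d) -> 'M[R]_(nJ, nI) -> R)
  (W : 'M[R]_(nI, d)) (H : 'M[R]_(nJ, nI)) : Prop :=
  exists e : R, 0 < e /\
    forall (W' : 'M[R]_(nI, d)) (H' : 'M[R]_(nJ, nI)),
      (forall i l, `|W' i l - W i l| < e) ->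
      (forall j i, `|H' j i - H j i| < e) ->
      f W' H' <= f W H.

(* Main.v *)
Require Import Defs.
From HB Require Import structures.
From mathcomp Require Import all_boot all_order all_algebra.
From mathcomp Require Import ring lra.
Import Order.TTheory GRing.Theory Num.Theory.
Local Open Scope ring_scope.

Section Aux.
Variables (R : realFieldType) (d nI nJ nK : nat) (ap am : R)
  (xs : 'I_nK -> 'cV[R]_d) (ys : 'I_nK -> 'cV[R]_nJ)
  (W : 'M[R]_(nI, d)) (H : 'M[R]_(nJ, nI)) (j : 'I_nJ) (i : 'I_nI).

Definition Hp (t : R) : 'M[R]_(nJ, nI) :=
  H + \matrix_(a, b) (if (a == j) && (b == i) then t else 0).

Lemma net_Hp t x j' : net_out ap am W (Hp t) x j' =
  net_out ap am W H x j' + (j' == j)%:R * (t * rho ap am (dotrow W i x)).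
Proof.
rewrite /net_out /Hp.
under eq_bigr => b _ do rewrite !mxE mulrDl.
rewrite big_split /=; congr (_ + _).
rewrite (bigD1 i) //= big1 ?addr0; last first.
  by move=> b /negbTE ->; rewrite andbF mul0r.
by rewrite eqxx andbT; case: (j' == j); rewrite /= ?mul1r ?mul0r.
Qed.

Lemma loss_Hp t : loss ap am xs ys W (Hp t) + loss ap am xs ys W (Hp (- t)) =
  2 * loss ap am xs ys W H + \sum_(k < nK) \sum_(j' < nJ)
     ((j' == j)%:R * (t * rho ap am (dotrow W i (xs k)))) ^+ 2.
Proof.
rewrite /loss -mulrDr.
have -> : \sum_(k < nK) \sum_(j' < nJ) ((j' == j)%:R * (t * rho ap am (dotrow W i (xs k)))) ^+ 2
  = 2^-1 * (2 * \sum_(k < nK) \sum_(j' < nJ) ((j' == j)%:R * (t * rho ap am (dotrow W i (xs k)))) ^+ 2).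
  by rewrite mulrA mulVf ?mul1r // pnatr_eq0.
rewrite mulrCA -mulrDr; congr (_ * _).
rewrite -big_split /= !mulr_sumr -big_split /=; apply: eq_bigr => k _.
rewrite -big_split /= !mulr_sumr -big_split /=; apply: eq_bigr => j' _.
rewrite !net_Hp; ring.
Qed.
End Aux.
Arguments Hp {R nI nJ}.
Arguments loss_Hp {R d nI nJ nK}.

Theorem theorem2 (R : realFieldType) (d nI nJ nK : nat) (ap am : R)
  (xs : 'I_nK -> 'cV[R]_d) (ys : 'I_nK -> 'cV[R]_nJ)
  (W : 'M[R]_(nI, d)) (H : 'M[R]_(nJ, nI)) :
  (1 < d)%N -> (0 < nJ)%N -> ap != am ->
  (exists (i : 'I_nI) (k : 'I_nK), rho ap am (dotrow W i (xs k)) != 0) ->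
  ~ local_max (loss ap am xs ys) W H.
Proof.
move=> _ hJ _ [i [k0 hr]] [e [he hmax]].
pose j : 'I_nJ := Ordinal hJ.
pose t := e / 2.
have ht : 0 < t by rewrite divr_gt0.
have hte : t < e by rewrite /t; lra.
have close : forall s, `|s| = t -> forall j' i', `|Hp H j i s j' i' - H j' i'| < e.
  move=> s hs j' i'; rewrite /Hp !mxE addrAC subrr add0r.
  by case: ifP => _; rewrite ?hs ?normr0.
have hW : forall a b, `|W a b - W a b| < e by move=> a b; rewrite subrr normr0.
have h1 := hmax W (Hp H j i t) hW (close t (gtr0_norm ht)).
have htn : `|- t| = t by rewrite normrN gtr0_norm.
have h2 := hmax W (Hp H j i (- t)) hW
   (close (- t) htn).
have := loss_Hp ap am xs ys W H j i t.
set D := \sum_(k < nK) _.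
have hD : 0 < D.
  rewrite /D (bigD1 k0) //= (bigD1 j) //= mul1r -addrA.
  have a : 0 <= \sum_(i0 < nJ | i0 != j)
       ((i0 == j)%:R * (t * rho ap am (dotrow W i (xs k0)))) ^+ 2.
    by apply: sumr_ge0 => *; rewrite sqr_ge0.
  have b : 0 <= \sum_(i0 < nK | i0 != k0)
       \sum_(j' < nJ)
          ((j' == j)%:R * (t * rho ap am (dotrow W i (xs i0)))) ^+ 2.
    by apply: sumr_ge0 => *; apply: sumr_ge0 => *; rewrite sqr_ge0.
  have c : 0 < (t * rho ap am (dotrow W i (xs k0))) ^+ 2.
    by rewrite lt_def sqr_ge0 andbT sqrf_eq0 mulf_eq0 negb_or gt_eqF.
  lra.
move=> E; move: h1 h2; lra.
Qed.
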